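(* Let $T$ be a complete theory with monster model $\mathcal{U}$, $A\subseteq\mathcal{U}$ small, $\mu\in\mathfrak{M}_x(\mathcal{U})$, $\nu\in\mathfrak{M}_y(\mathcal{U})$, and $\varphi(y)\in\mathcal{L}_y(A)$ with $0<\nu(\varphi(y))<1$. Suppose $\mu\geq_{\mathbb{E},A}\nu$ and this is witnessed by some $\lambda\in\mathfrak{M}^{\mathrm{Am}}_{xy}(A)$. Then $\mu\geq_{\mathbb{E},A}\nu_{[\varphi]}$.
   Context: For $B\subseteq\mathcal{U}$, $\mathcal{L}_x(B)$ is the Boolean algebra of formulas in $x$ with parameters from $B$ modulo $T$, embedded in $\mathcal{L}_{xy}(B)$ via $\varphi(x)\mapsto\varphi(x)\wedge y=y$; $\mathfrak{M}_x(B)$ is the set of finitely additive probability measures on $\mathcal{L}_x(B)$. For $\omega\in\mathfrak{M}_{xy}(B)$, $\pi_x(\omega)(\varphi(x))=\omega(\varphi(x)\wedge y=y)$ (similarly $\pi_y$); $\omega|_C$ is restriction. $\mu\geq_{\mathbb{E},A}\nu$ witnessed by $\lambda\in\mathfrak{M}_{xy}(A)$ means $\pi_x(\lambda)=\mu|_A$ and every $\omega\in\mathfrak{M}_{xy}(\mathcal{U})$ with $\omega|_A=\lambda$, $\pi_x(\omega)=\mu$ satisfies $\pi_y(\omega)=\nu$. $\mathfrak{M}^{\mathrm{Am}}_{xy}(A)$ is the set of separated amalgams: $\lambda\in\mathfrak{M}_{xy}(A)$ with $\lambda(\varphi(x)\wedge\psi(y))=\pi_x(\lambda)(\varphi(x))\cdot\pi_y(\lambda)(\psi(y))$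 for all $\varphi(x)\in\mathcal{L}_x(A)$, $\psi(y)\in\mathcal{L}_y(A)$. The localization $\nu_{[\varphi]}\in\mathfrak{M}_y(\mathcal{U})$ is $\nu_{[\varphi]}(\psi(y))=\nu(\varphi(y)\wedge\psi(y))/\nu(\varphi(y))$. *)

(* Defs.v *)
From mathcomp Require Import all_boot.
From Stdlib Require Import Rdefinitions Raxioms.
From Stdlib Require List.

Set Implicit Arguments.
Unset Strict Implicit.
Unset Printing Implicit Defensive.

Record signature := Signature {
  fsym : Type; farity : fsym -> nat;
  rsym : Type; rarity : rsym -> nat }.

Record structure (L : signature) := Structure {
  carrier :> Type;
  fun_interp : forall f : fsym L, ('I_(farity f) -> carrier) -> carrier;
  rel_interp : forall r : rsym L, ('I_(rarity r) -> carrier) -> Prop }.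

Inductive term (L : signature) (P : Type) : Type :=
  | Tvar of nat
  | Tpar of P
  | Tapp (f : fsym L) of ('I_(farity f) -> term L P).

Inductive formula (L : signature) (P : Type) : Type :=
  | Ftrue
  | Feq of term L P & term L P
  | Frel (r : rsym L) of ('I_(rarity r) -> term L P)
  | Fneg of formula L P
  | Fand of formula L P & formula L P
  | Fex of nat & formula L P.

Arguments Tvar {L P}. Arguments Tpar {L P}. Arguments Tapp {L P}.
Arguments Ftrue {L P}. Arguments Feq {L P}. Arguments Frel {L P}.
Arguments Fneg {L P}. Arguments Fand {L P}. Arguments Fex {L P}.

Definition For L P (p q : formula L P) : formula L P := Fneg (Fand (Fneg p) (Fneg q)).

Definition upd (M : Type) (v : nat -> M) (i : nat) (a : M) : nat -> M :=
  fun k => if k == i then a else v k.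

Fixpoint teval L (M : structure L) (v : nat -> M) (t : term L M) : M :=
  match t with
  | Tvar i => v i
  | Tpar a => a
  | Tapp f args => @fun_interp L M f (fun j => teval v (args j))
  end.

Fixpoint sat L (M : structure L) (v : nat -> M) (p : formula L M) : Prop :=
  match p with
  | Ftrue => True
  | Feq t1 t2 => teval v t1 = teval v t2
  | Frel r args => @rel_interp L M r (fun j => teval v (args j))
  | Fneg q => ~ sat v q
  | Fand q1 q2 => sat v q1 /\ sat v q2
  | Fex i q => exists a : M, sat (upd v i a) q
  end.

Fixpoint term_vars_in L P (S : nat -> Prop) (t : term L P) : Prop :=
  match t with
  | Tvar i => S i
  | Tpar _ => True
  | Tapp f args => forall j, term_vars_in S (args j)
  end.

Fixpoint form_vars_in L P (S : nat -> Prop) (p : formula L P) : Prop :=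
  match p with
  | Ftrue => True
  | Feq t1 t2 => term_vars_in S t1 /\ term_vars_in S t2
  | Frel r args => forall j, term_vars_in S (args j)
  | Fneg q => form_vars_in S q
  | Fand q1 q2 => form_vars_in S q1 /\ form_vars_in S q2
  | Fex i q => form_vars_in (fun k => k = i \/ S k) q
  end.

Fixpoint term_pars_in L P (B : P -> Prop) (t : term L P) : Prop :=
  match t with
  | Tvar _ => True
  | Tpar a => B a
  | Tapp f args => forall j, term_pars_in B (args j)
  end.

Fixpoint form_pars_in L P (B : P -> Prop) (p : formula L P) : Prop :=
  match p with
  | Ftrue => True
  | Feq t1 t2 => term_pars_in B t1 /\ term_pars_in B t2
  | Frel r args => forall j, term_pars_in B (args j)
  | Fneg q => form_pars_in B q
  | Fand q1 q2 => form_pars_in B q1 /\ form_pars_in B q2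
  | Fex _ q => form_pars_in B q
  end.

Definition card_lt (X Y : Type) : Prop :=
  (exists f : X -> Y, injective f) /\ ~ (exists g : Y -> X, injective g).

(* B is small: |B| < kappa, kappa represented by the type K *)
Definition small L (U : structure L) (K : Type) (B : U -> Prop) : Prop :=
  card_lt {a : U | B a} K.

(* kappa-saturation: finitely satisfiable (partial) 1-types over small sets
   are realized *)
Definition saturated L (U : structure L) (K : Type) : Prop :=
  forall B : U -> Prop, small K B ->
  forall p : formula L U -> Prop,
    (forall q, p q -> form_vars_in (fun k => k = 0%N) q /\ form_pars_in B q) ->
    (forall s : list (formula L U), List.Forall p s ->
        exists a : U, List.Forall (fun q => sat (fun _ => a) q) s) ->
    exists a : U, forall q, p q -> sat (fun _ => a) q.

Definition automorphism L (U : structure L) (s : U -> U) : Prop :=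
  bijective s /\
  (forall f args, s (@fun_interp L U f args) = @fun_interp L U f (fun j => s (args j))) /\
  (forall r args, @rel_interp L U r args <-> @rel_interp L U r (fun j => s (args j))).

Definition elementary_on L (U : structure L) (B : U -> Prop) (f : U -> U) : Prop :=
  forall q : formula L U, form_pars_in (fun _ => False) q ->
  forall v : nat -> U, (forall k, B (v k)) -> (sat v q <-> sat (f \o v) q).

Definition str_homogeneous L (U : structure L) (K : Type) : Prop :=
  forall B : U -> Prop, small K B ->
  forall f : U -> U, elementary_on B f ->
  exists s, automorphism s /\ forall a, B a -> s a = f a.

(* U is a monster model (of its complete theory T = Th(U)) with respect to
   the cardinal kappa = |K| > |T| *)
Definition monster L (U : structure L) (K : Type) : Prop :=
  [/\ inhabited U, card_lt (fsym L + rsym L + nat)%type K,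
      saturated U K & str_homogeneous U K].

Definition LF L (U : structure L) (x : seq nat) (B : U -> Prop)
  (p : formula L U) : Prop :=
  form_vars_in (fun k => k \in x) p /\ form_pars_in B p.

(* equivalence modulo T (with parameters): same realizations in U *)
Definition equivU L (U : structure L) (p q : formula L U) : Prop :=
  forall v : nat -> U, sat v p <-> sat v q.

Definition setT_ (U : Type) : U -> Prop := fun _ => True.

(* A (representative of a) finitely additive probability measure on
   L_x(B); only its values on formulas satisfying LF x B matter. *)
Definition keisler L (U : structure L) (x : seq nat) (B : U -> Prop)
  (mu : formula L U -> R) : Prop :=
  [/\ forall p q, LF x B p -> LF x B q -> equivU p q -> mu p = mu q,
      forall p, LF x B p -> Rle 0 (mu p),
      mu Ftrue = 1%R &
      forall p q, LF x B p -> LF x B q ->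
        (forall v, ~ (sat v p /\ sat v q)) ->
        mu (For p q) = Rplus (mu p) (mu q)].

(* equality of two measures as elements of M_x(B) *)
Definition agree L (U : structure L) (x : seq nat) (B : U -> Prop)
  (mu nu : formula L U -> R) : Prop :=
  forall p, LF x B p -> mu p = nu p.

Definition tuple_eq L P (y : seq nat) : formula L P :=
  foldr (fun i acc => Fand (Feq (Tvar i) (Tvar i)) acc) Ftrue y.

Definition pi_x L (U : structure L) (y : seq nat) (om : formula L U -> R) :
  formula L U -> R := fun p => om (Fand p (@tuple_eq L U y)).

Definition pi_y L (U : structure L) (x : seq nat) (om : formula L U -> R) :
  formula L U -> R := fun q => om (Fand (@tuple_eq L U x) q).

Definition E_dom_witness L (U : structure L) (x y : seq nat) (A : U -> Prop)
  (mu nu lam : formula L U -> R) : Prop :=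
  [/\ keisler (x ++ y) A lam,
      agree x A (pi_x y lam) mu &
      forall om, keisler (x ++ y) (@setT_ U) om ->
        agree (x ++ y) A om lam ->
        agree x (@setT_ U) (pi_x y om) mu ->
        agree y (@setT_ U) (pi_y x om) nu].

Definition E_dom L (U : structure L) (x y : seq nat) (A : U -> Prop)
  (mu nu : formula L U -> R) : Prop :=
  exists lam, E_dom_witness x y A mu nu lam.

Definition sep_amalgam L (U : structure L) (x y : seq nat) (A : U -> Prop)
  (lam : formula L U -> R) : Prop :=
  keisler (x ++ y) A lam /\
  forall p q, LF x A p -> LF y A q ->
    lam (Fand p q) = Rmult (pi_x y lam p) (pi_y x lam q).

Definition localize L (U : structure L) (nu : formula L U -> R)
  (phi : formula L U) : formula L U -> R :=
  fun q => Rdiv (nu (Fand phi q)) (nu phi).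

(* Main.v *)
Require Import Defs.
From mathcomp Require Import all_boot.
From Stdlib Require Import Rdefinitions.
From mathcomp Require Import classical_sets boolp.
From Stdlib Require Import Reals Lra ClassicalEpsilon FunctionalExtensionality Classical.

(* Proof outline:
   a Hahn-Banach/Riesz-type extension (HB section) + a Horn-Tarski positivity
   lemma (via minimisation over the y-variables) yields extensions of
   Keisler measures with prescribed x-marginal (theorem ext); the main result
   follows by decomposing lam = c*lam_[phi] + (1-c)*lam_[~phi]. *)

Set Implicit Arguments.
Unset Strict Implicit.

Section HB.
Local Open Scope R_scope.
Variable Om : Type.
Variable G : (Om -> R) -> R -> Prop.
Hypothesis Gadd : forall g h r s, G g r -> G h s -> G (fun v => g v + h v) (r + s).
Hypothesis Gscale : forall g r k, 0 < k -> G g r -> G (fun v => k * g v) (k * r).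
Hypothesis Gmono : forall g h r, G g r -> (forall v, h v <= g v) -> G h r.
Hypothesis G0 : forall r, G (fun _ => 0) r -> 0 <= r.

Record PF := MkPF {
  W : (Om -> R) -> Prop; Lf : (Om -> R) -> R;
  W0 : W (fun _ => 0);
  Wlin : forall a b w w', W w -> W w' -> W (fun v => a * w v + b * w' v);
  Llin : forall a b w w', W w -> W w' ->
     Lf (fun v => a * w v + b * w' v) = a * Lf w + b * Lf w';
  Ldom : forall w r, W w -> G w r -> Lf w <= r }.

Definition PFle (P Q : PF) := (forall w, W P w -> W Q w) /\ (forall w, W P w -> Lf Q w = Lf P w).

Definition P0 : PF.
refine (@MkPF (fun w => w = (fun _ => 0)) (fun _ => 0) _ _ _ _).
- reflexivity.
- move=> a b w w' -> ->; apply: functional_extensionality => v; ring.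
- move=> *; ring.
- move=> w r -> Hg; exact: G0.
Defined.

Lemma Wscale (P : PF) k w : W P w -> W P (fun v => k * w v).
Proof.
move=> Hw; have := Wlin k 0 Hw Hw.
have -> : (fun v => k * w v + 0 * w v) = (fun v => k * w v) by
  apply: functional_extensionality => v; ring.
done.
Qed.

Lemma Lscale (P : PF) k w : W P w -> Lf P (fun v => k * w v) = k * Lf P w.
Proof.
move=> Hw; have := Llin k 0 Hw Hw.
have -> : (fun v => k * w v + 0 * w v) = (fun v => k * w v) by
  apply: functional_extensionality => v; ring.
move=> ->; ring.
Qed.

Lemma Wfun (P : PF) w w' : W P w -> (forall v, w v = w' v) -> W P w'.
Proof. by move=> H E; have <- : w = w' by apply: functional_extensionality. Qed.

Lemma Lfun (P : PF) w w' : (forall v, w v = w' v) -> Lf P w = Lf P w'.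
Proof. by move=> E; have <- : w = w' by apply: functional_extensionality. Qed.

Section Chain.
Variable C : PF -> Prop.
Hypothesis Ctot : forall P Q, C P -> C Q -> PFle P Q \/ PFle Q P.
Variable P1 : PF.
Hypothesis CP1 : C P1.

Definition Wc w := exists P, C P /\ W P w.
Definition Lc w : R :=
  match excluded_middle_informative (exists P, C P /\ W P w) with
  | left h => Lf (proj1_sig (constructive_indefinite_description _ h)) w
  | right _ => 0 end.

Lemma Lc_eq P w : C P -> W P w -> Lc w = Lf P w.
Proof.
move=> CP WP; rewrite /Lc; case: excluded_middle_informative => [h|]; last first.
  by move=> nh; exfalso; apply: nh; exists P.
case: (constructive_indefinite_description _ h) => Q [CQ WQ] /=.
by case: (Ctot CP CQ) => [[_ H]|[_ H]]; [rewrite H | rewrite H].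
Qed.

Lemma Wc_two w w' : Wc w -> Wc w' -> exists P, C P /\ W P w /\ W P w'.
Proof.
move=> [P [CP WP]] [Q [CQ WQ]].
case: (Ctot CP CQ) => [[H _]|[H _]].
- by exists Q; split => //; split => //; apply: H.
- by exists P; split => //; split => //; apply: H.
Qed.

Definition Pc : PF.
refine (@MkPF Wc Lc _ _ _ _).
- by exists P1; split => //; apply: W0.
- move=> a b w w' Hw Hw'; have [P [CP [H1 H2]]] := Wc_two Hw Hw'.
  by exists P; split => //; apply: Wlin.
- move=> a b w w' Hw Hw'; have [P [CP [H1 H2]]] := Wc_two Hw Hw'.
  rewrite (Lc_eq CP (Wlin a b H1 H2)) (Lc_eq CP H1) (Lc_eq CP H2).
  exact: Llin.
- move=> w r [P [CP WP]] Hg; rewrite (Lc_eq CP WP); exact: Ldom.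
Defined.

Lemma Pc_ub P : C P -> PFle P Pc.
Proof.
move=> CP; split; first by move=> w Hw; exists P.
by move=> w Hw; exact: Lc_eq.
Qed.
End Chain.

Section Step.
Variable P : PF.
Variable t : Om -> R.
Hypothesis tnot : ~ W P t.
Hypothesis tub : exists r, G t r.
Hypothesis tlb : exists r, G (fun v => - t v) r.

Definition Aset (a : R) := exists w r, W P w /\ G (fun v => w v - t v) r /\ a = Lf P w - r.

Lemma AB w r w' r' : W P w -> G (fun v => w v - t v) r -> W P w' ->
  G (fun v => w' v + t v) r' -> Lf P w - r <= r' - Lf P w'.
Proof.
move=> Hw Hg Hw' Hg'.
have H := Gadd Hg Hg'.
have H2 : G (fun v => 1 * w v + 1 * w' v) (r + r').
  apply: (@Gmono _ _ _ H) => v; lra.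
have := Ldom (Wlin 1 1 Hw Hw') H2; rewrite Llin //; lra.
Qed.

Lemma tau_ex : exists tau, (forall w r, W P w -> G (fun v => w v - t v) r -> Lf P w - r <= tau) /\
   (forall w' r', W P w' -> G (fun v => w' v + t v) r' -> tau <= r' - Lf P w').
Proof.
have [r0 Hr0] := tub. have [r1 Hr1] := tlb.
have B0 : G (fun v => (fun _ => 0) v + t v) r0 by apply: (@Gmono _ _ _ Hr0) => v; lra.
have A0 : G (fun v => (fun _ => 0) v - t v) r1 by apply: (@Gmono _ _ _ Hr1) => v; lra.
have bnd : bound Aset.
  exists (r0 - Lf P (fun _ => 0)) => a [w [r [Hw [Hg ->]]]].
  exact: AB Hw Hg (W0 P) B0.
have ne : exists a, Aset a.
  by exists (Lf P (fun _ => 0) - r1), (fun _ => 0), r1; split => //; apply: W0.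
have [tau [ub lub]] := completeness Aset bnd ne.
exists tau; split.
- move=> w r Hw Hg; apply: ub; by exists w, r.
- move=> w' r' Hw' Hg'; apply: lub => a [w [r [Hw [Hg ->]]]].
  exact: AB Hw Hg Hw' Hg'.
Qed.

Definition tau := proj1_sig (constructive_indefinite_description _ tau_ex).

Lemma decomp_uniq w0 s w1 s' : W P w0 -> W P w1 ->
  (forall v, w0 v + s * t v = w1 v + s' * t v) -> s = s' /\ forall v, w0 v = w1 v.
Proof.
move=> H0 H1 E.
have ss : s = s'.
  case: (Req_dec s s') => // ne; exfalso; apply: tnot.
  apply: (Wfun (Wlin (/ (s' - s)) (- / (s' - s)) H0 H1)) => v.
  have := E v => Ev.
  have nz : s' - s <> 0 by lra.
  field_simplify; [|done]. 
  apply: (Rmult_eq_reg_r (s' - s)); last done.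
  field_simplify; [|done]. lra.
split => // v; have := E v; rewrite ss; lra.
Qed.

Definition W' w := exists w0 s, W P w0 /\ forall v, w v = w0 v + s * t v.
Definition L' w : R :=
  match excluded_middle_informative (exists p : (Om -> R) * R, W P p.1 /\ forall v, w v = p.1 v + p.2 * t v) with
  | left h => let p := proj1_sig (constructive_indefinite_description _ h) in Lf P p.1 + p.2 * tau
  | right _ => 0 end.

Lemma L'_eq w w0 s : W P w0 -> (forall v, w v = w0 v + s * t v) -> L' w = Lf P w0 + s * tau.
Proof.
move=> H0 E; rewrite /L'; case: excluded_middle_informative => [h|nh]; last first.
  by exfalso; apply: nh; exists (w0, s).
case: (constructive_indefinite_description _ h) => [[w1 s1] [H1 E1]] /=.
have [-> E2] : s1 = s /\ forall v, w1 v = w0 v.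
  apply: decomp_uniq => // v; by rewrite -E1 E.
by rewrite (Lfun P E2).
Qed.

Definition Pnext : PF.
refine (@MkPF W' L' _ _ _ _).
- exists (fun _ => 0), 0; split; [apply: W0| move=> v; ring].
- move=> a b w w' [w0 [s [H0 E0]]] [w1 [s1 [H1 E1]]].
  exists (fun v => a * w0 v + b * w1 v), (a * s + b * s1); split; first exact: Wlin.
  move=> v; rewrite E0 E1; ring.
- move=> a b w w' [w0 [s [H0 E0]]] [w1 [s1 [H1 E1]]].
  rewrite (L'_eq H0 E0) (L'_eq H1 E1).
  rewrite (@L'_eq _ (fun v => a * w0 v + b * w1 v) (a * s + b * s1)); first last.
  + by move=> v; rewrite E0 E1; ring.
  + exact: Wlin.
  rewrite Llin //; ring.
- move=> w r [w0 [s [H0 E0]]] Hg; rewrite (L'_eq H0 E0).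
  have [tl tu] := proj2_sig (constructive_indefinite_description _ tau_ex); rewrite -/tau in tl tu.
  case: (Rtotal_order s 0) => [sneg|[s0|spos]].
  +
    pose k := - / s.
    have kpos : 0 < k by rewrite /k; apply: Ropp_0_gt_lt_contravar; apply: Rinv_lt_0_compat.
    have Hg2 := Gscale kpos Hg.
    have Hg3 : G (fun v => (fun v => k * w0 v) v - t v) (k * r).
      apply: (@Gmono _ _ _ Hg2) => v; rewrite E0 /k; field_simplify; lra.
    have := tl _ _ (Wscale k H0) Hg3; rewrite Lscale // /k => h.
    have : (- / s) * (Lf P w0 + s * tau - r) <= 0.
      have -> : (- / s) * (Lf P w0 + s * tau - r) = (- / s * Lf P w0 - - / s * r) - tau.
        field; lra.
      lra.
    move=> h2.
    have : 0 < - / s by apply: Ropp_0_gt_lt_contravar; apply: Rinv_lt_0_compat.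
    move=> h3.
    have : Lf P w0 + s * tau - r <= 0.
      case: (Rle_dec (Lf P w0 + s * tau - r) 0) => // /Rnot_le_lt h4.
      have := Rmult_lt_0_compat _ _ h3 h4; lra.
    lra.
  + subst s.
    have Hg2 : G w0 r by apply: (@Gmono _ _ _ Hg) => v; rewrite E0; lra.
    have := Ldom H0 Hg2; lra.
  + pose k := / s.
    have kpos : 0 < k by apply: Rinv_0_lt_compat.
    have Hg2 := Gscale kpos Hg.
    have Hg3 : G (fun v => (fun v => k * w0 v) v + t v) (k * r).
      apply: (@Gmono _ _ _ Hg2) => v; rewrite E0 /k; field_simplify; lra.
    have := tu _ _ (Wscale k H0) Hg3; rewrite Lscale // /k => h.
    have : s * (/ s * r - / s * Lf P w0) = r - Lf P w0 by field; lra.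
    have : s * tau <= s * (/ s * r - / s * Lf P w0).
      by apply: Rmult_le_compat_l; lra.
    lra.
Defined.

Lemma Pnext_ge : PFle P Pnext /\ W Pnext t.
Proof.
split; [split|].
- by move=> w Hw; exists w, 0; split => // v; ring.
- move=> w Hw /=; rewrite (@L'_eq w w 0) //; [ring | move=> v; ring].
- exists (fun _ => 0), 1; split; [apply: W0 | move=> v; ring].
Qed.
End Step.

Lemma HB_main : exists P : PF, forall t, (exists r, G t r) -> (exists r, G (fun v => - t v) r) -> W P t.
Proof.
pose R := fun P Q => `[< PFle P Q >].
have [P Pmax] : exists P, premaximal R P.
  apply: (@ZL_preorder PF P0 R).
- by move=> P; apply/asboolP; split.
- move=> P Q S /asboolP [h1 h2] /asboolP [h3 h4]; apply/asboolP; split.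
  + by move=> w /h1 /h3.
  + by move=> w Hw; rewrite h4 ?h2 //; apply: h1.
- move=> A Atot.
  case: (classic (exists P, A P)) => [[P1 AP1]|nA]; last first.
    by exists P0 => s As; exfalso; apply: nA; exists s.
  have Ctot : forall P Q, A P -> A Q -> PFle P Q \/ PFle Q P.
    move=> P Q AP AQ; case: (Atot _ _ AP AQ) => /asboolP; by [left|right].
  exists (Pc Ctot AP1) => s As; apply/asboolP; exact: Pc_ub.
exists P => t tu tl.
case: (classic (W P t)) => // nt.
have [le Wt] := Pnext_ge nt tu tl.
have /asboolP [h _] := Pmax _ (introT (asboolP _) le).
exact: h.
Qed.
End HB.

Section MT.
Local Open Scope R_scope.
Variable L : signature.
Variable U : structure L.
Notation form := (formula L U).

Lemma teval_coinc (S : nat -> Prop) (t : term L U) (v v' : nat -> U) :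
  term_vars_in S t -> (forall k, S k -> v k = v' k) -> teval v t = teval v' t.
Proof.
elim: t => [i|a|f args IH] /= H E; [exact: E | done |].
congr (fun_interp _); apply: functional_extensionality => j; exact: IH.
Qed.

Lemma sat_coinc (p : form) : forall (S : nat -> Prop) (v v' : nat -> U),
  form_vars_in S p -> (forall k, S k -> v k = v' k) -> (sat v p <-> sat v' p).
Proof.
elim: p => [|t1 t2|r args|q IH|q1 IH1 q2 IH2|i q IH] S v v' /= H E.
- done.
- by rewrite (teval_coinc H.1 E) (teval_coinc H.2 E).
- have -> : (fun j => teval v (args j)) = (fun j => teval v' (args j)) by
    apply: functional_extensionality => j; exact: teval_coinc (H j) E.
  done.
- by rewrite (IH S v v' H E).
- by rewrite (IH1 S v v' H.1 E) (IH2 S v v' H.2 E).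
- split => -[a Ha]; exists a.
  + apply/(IH _ _ _ H _).2: Ha => k [->|Sk]; rewrite /upd.
    * by rewrite eqxx.
    * by case: eqP => // _; rewrite E.
  + apply/(IH _ _ _ H _).1: Ha => k [->|Sk]; rewrite /upd.
    * by rewrite eqxx.
    * by case: eqP => // _; rewrite E.
Qed.

Lemma term_vars_mono (S S' : nat -> Prop) (t : term L U) :
  (forall k, S k -> S' k) -> term_vars_in S t -> term_vars_in S' t.
Proof. elim: t => [i|a|f args IH] /= H; auto. Qed.

Lemma form_vars_mono (p : form) : forall (S S' : nat -> Prop),
  (forall k, S k -> S' k) -> form_vars_in S p -> form_vars_in S' p.
Proof.
elim: p => [|t1 t2|r args|q IH|q1 IH1 q2 IH2|i q IH] S S' HS /=.
- done.
- by case=> h1 h2; split; apply: term_vars_mono h1 || apply: term_vars_mono h2.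
- by move=> h j; apply: term_vars_mono (h j).
- exact: IH.
- by case=> h1 h2; split; [apply: IH1 h1 | apply: IH2 h2].
- by apply: IH => k [->|/HS]; auto.
Qed.

Lemma term_pars_mono (B B' : U -> Prop) (t : term L U) :
  (forall a, B a -> B' a) -> term_pars_in B t -> term_pars_in B' t.
Proof. elim: t => [i|a|f args IH] /= H; auto. Qed.

Lemma form_pars_mono (B B' : U -> Prop) (p : form) :
  (forall a, B a -> B' a) -> form_pars_in B p -> form_pars_in B' p.
Proof.
move=> HB; elim: p => [|t1 t2|r args|q IH|q1 IH1 q2 IH2|i q IH] /=; try tauto.
- by case=> h1 h2; split; apply: term_pars_mono h1 || apply: term_pars_mono h2.
- by move=> h j; apply: term_pars_mono (h j).
Qed.

Lemma LF_mono (S S' : seq nat) (B B' : U -> Prop) (p : form) :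
  (forall k, k \in S -> k \in S') -> (forall a, B a -> B' a) -> LF S B p -> LF S' B' p.
Proof.
move=> h1 h2 [h3 h4]; split; first exact: form_vars_mono h3.
exact: form_pars_mono h4.
Qed.

Lemma LF_true S B : LF S B (@Ftrue L U). Proof. by []. Qed.
Lemma LF_and S B (p q : form) : LF S B p -> LF S B q -> LF S B (Fand p q).
Proof. by move=> [? ?] [? ?]; split; split. Qed.
Lemma LF_neg S B (p : form) : LF S B p -> LF S B (Fneg p).
Proof. by move=> [? ?]; split. Qed.
Lemma LF_or S B (p q : form) : LF S B p -> LF S B q -> LF S B (For p q).
Proof. by move=> [? ?] [? ?]; split; split. Qed.

Lemma LF_tuple_eq S B (ys : seq nat) : (forall k, k \in ys -> k \in S) -> LF S B (@tuple_eq L U ys).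
Proof.
elim: ys => [|i ys IH] H; first by [].
have [h1 h2] := IH (fun k hk => H k (introT orP (or_intror hk))).
split; split => //=.
by split; apply: H; rewrite inE eqxx.
Qed.

Lemma sat_tuple_eq (v : nat -> U) ys : sat v (@tuple_eq L U ys).
Proof. by elim: ys => //= i ys IH. Qed.

Lemma sat_or v (p q : form) : sat v (For p q) <-> sat v p \/ sat v q.
Proof. rewrite /For /=; split; [apply: NNPP; tauto | tauto]. Qed.

Section K.
Variables (S : seq nat) (B : U -> Prop) (m : form -> R).
Hypothesis hk : keisler S B m.

Lemma kinv p q : LF S B p -> LF S B q -> equivU p q -> m p = m q.
Proof. by case: hk => h _ _ _; apply: h. Qed.
Lemma kge0 p : LF S B p -> 0 <= m p.
Proof. by case: hk => _ h _ _; apply: h. Qed.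
Lemma ktrue : m Ftrue = 1.
Proof. by case: hk. Qed.
Lemma kadd p q : LF S B p -> LF S B q -> (forall v, ~ (sat v p /\ sat v q)) ->
  m (For p q) = m p + m q.
Proof. by case: hk => _ _ _ h; apply: h. Qed.

Lemma kzero p : LF S B p -> (forall v, ~ sat v p) -> m p = 0.
Proof.
move=> Hp Hn.
have h1 := kadd Hp Hp (fun v h => Hn v h.1).
have h2 : m (For p p) = m p.
  apply: kinv; [exact: LF_or | done | move=> v; rewrite sat_or; tauto].
lra.
Qed.

Lemma ksplit p e : LF S B p -> LF S B e -> m p = m (Fand p e) + m (Fand p (Fneg e)).
Proof.
move=> Hp He.
have Ha := LF_and Hp He. have Hb := LF_and Hp (LF_neg He).
rewrite -(kadd Ha Hb); last by move=> v /= ; tauto.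
apply: kinv => //; first exact: LF_or.
move=> v; rewrite sat_or /=; split; [move=> h; case: (classic (sat v e)); tauto | tauto].
Qed.

Lemma kmono p q : LF S B p -> LF S B q -> (forall v, sat v p -> sat v q) -> m p <= m q.
Proof.
move=> Hp Hq H.
rewrite (ksplit Hq Hp).
have -> : m (Fand q p) = m p by apply: kinv => //; [exact: LF_and | move=> v /=; split; [tauto| move=> h; split; auto]].
have := kge0 (LF_and Hq (LF_neg Hp)); lra.
Qed.

Lemma kneg p : LF S B p -> m (Fneg p) = 1 - m p.
Proof.
move=> Hp; have := ksplit (@LF_true S B) Hp.
rewrite ktrue.
have -> : m (Fand Ftrue p) = m p by apply: kinv => //; [exact: LF_and | move=> v /=; tauto].
have -> : m (Fand Ftrue (Fneg p)) = m (Fneg p) by apply: kinv; [exact: LF_and (LF_true _ _) (LF_neg Hp) | exact: LF_neg Hp | move=> v /=; tauto].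
lra.
Qed.
End K.

End MT.

Section Trees.
Local Open Scope R_scope.
Variable L : signature.
Variable U : structure L.
Notation form := (formula L U).

Definition sdec (v : nat -> U) (p : form) : bool :=
  if excluded_middle_informative (sat v p) then true else false.

Lemma sdecP v p : sdec v p = true <-> sat v p.
Proof. rewrite /sdec; case: excluded_middle_informative => //. Qed.

Lemma sdecN v p : sdec v p = false <-> ~ sat v p.
Proof. rewrite /sdec; case: excluded_middle_informative => //. Qed.

Inductive tree := Leaf of R | Node of form & tree & tree.

Fixpoint tev (t : tree) (v : nat -> U) : R :=
  match t with Leaf r => r | Node p a b => if sdec v p then tev a v else tev b v end.

Fixpoint tin (P : form -> Prop) (t : tree) : Prop :=
  match t with Leaf _ => True | Node p a b => P p /\ tin P a /\ tin P b end.

Fixpoint I (m : form -> R) (t : tree) (c : form) : R :=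
  match t with Leaf r => r * m c | Node p a b => I m a (Fand c p) + I m b (Fand c (Fneg p)) end.

Fixpoint tmapl (f : R -> R) (t : tree) : tree :=
  match t with Leaf r => Leaf (f r) | Node p a b => Node p (tmapl f a) (tmapl f b) end.

Fixpoint tadd (t t' : tree) : tree :=
  match t with Leaf r => tmapl (Rplus r) t' | Node p a b => Node p (tadd a t') (tadd b t') end.

Fixpoint tmin (t t' : tree) : tree :=
  match t with Leaf r => tmapl (Rmin r) t' | Node p a b => Node p (tmin a t') (tmin b t') end.

Lemma tin_mono (P Q : form -> Prop) t : (forall p, P p -> Q p) -> tin P t -> tin Q t.
Proof. move=> H; elim: t => //= p a IHa b IHb [? [? ?]]; auto. Qed.

Lemma tev_mapl f t v : tev (tmapl f t) v = f (tev t v).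
Proof. elim: t => //= p a IHa b IHb; by case: sdec. Qed.

Lemma tin_mapl P f t : tin P t -> tin P (tmapl f t).
Proof. elim: t => //= p a IHa b IHb [? [? ?]]; auto. Qed.

Lemma tev_add t t' v : tev (tadd t t') v = tev t v + tev t' v.
Proof. elim: t => /= [r|p a IHa b IHb]; [exact: tev_mapl | by case: sdec]. Qed.

Lemma tin_add P t t' : tin P t -> tin P t' -> tin P (tadd t t').
Proof. elim: t => /= [r|p a IHa b IHb] ; [move=> _; exact: tin_mapl | move=> [? [? ?]] ?; auto]. Qed.

Lemma tev_min t t' v : tev (tmin t t') v = Rmin (tev t v) (tev t' v).
Proof. elim: t => /= [r|p a IHa b IHb]; [exact: tev_mapl | by case: sdec]. Qed.

Lemma tin_min P t t' : tin P t -> tin P t' -> tin P (tmin t t').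
Proof. elim: t => /= [r|p a IHa b IHb] ; [move=> _; exact: tin_mapl | move=> [? [? ?]] ?; auto]. Qed.

Lemma tev_coinc (S : nat -> Prop) t v v' : tin (form_vars_in S) t ->
  (forall k, S k -> v k = v' k) -> tev t v = tev t v'.
Proof.
move=> + E; elim: t => //= p a IHa b IHb [Hp [Ha Hb]].
have h := sat_coinc Hp E.
case: (boolP (sdec v p)) => /= e1; case: (boolP (sdec v' p)) => /= e2; auto.
- by exfalso; move/negbTE: e2; move/sdecN; apply; apply/h/sdecP.
- by exfalso; move/negbTE: e1; move/sdecN; apply; apply/h/sdecP.
Qed.


Lemma tev_nt v p a b : sat v p -> tev (Node p a b) v = tev a v.
Proof. by move=> h /=; rewrite (proj2 (sdecP v p) h). Qed.
Lemma tev_nf v p a b : ~ sat v p -> tev (Node p a b) v = tev b v.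
Proof. by move=> h /=; rewrite (proj2 (sdecN v p) h). Qed.

Lemma I_scale m k t c : I m (tmapl (Rmult k) t) c = k * I m t c.
Proof. elim: t c => /= [r|p a IHa b IHb] c; [ring | rewrite IHa IHb; ring]. Qed.

Section Int.
Variables (S : seq nat) (B : U -> Prop) (m : form -> R).
Hypothesis hk : keisler S B m.
Notation D := (LF S B).

Lemma I_equiv t : tin D t -> forall c c', D c -> D c' -> equivU c c' -> I m t c = I m t c'.
Proof.
elim: t => /= [r|p a IHa b IHb] Ht c c' Hc Hc' E.
- by rewrite (kinv hk Hc Hc' E).
- case: Ht => Hp [Ha Hb].
  rewrite (IHa Ha (Fand c p) (Fand c' p)); first last.
  + by move=> v /=; rewrite E.
  + exact: LF_and.
  + exact: LF_and.
  rewrite (IHb Hb (Fand c (Fneg p)) (Fand c' (Fneg p))) //.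
  + exact: LF_and Hc (LF_neg Hp).
  + exact: LF_and Hc' (LF_neg Hp).
  + by move=> v /=; rewrite E.
Qed.

Lemma I_split t : tin D t -> forall c e, D c -> D e ->
  I m t c = I m t (Fand c e) + I m t (Fand c (Fneg e)).
Proof.
elim: t => /= [r|p a IHa b IHb] Ht c e Hc He.
- rewrite (ksplit hk Hc He); ring.
- case: Ht => Hp [Ha Hb].
  have Hcp := LF_and Hc Hp. have Hcnp := LF_and Hc (LF_neg Hp).
  have Hce := LF_and Hc He. have Hcne := LF_and Hc (LF_neg He).
  rewrite (IHa Ha _ _ Hcp He) (IHb Hb _ _ Hcnp He).
  rewrite (@I_equiv a Ha (Fand (Fand c p) e) (Fand (Fand c e) p)); first last.
  + move=> v /=; tauto.
  + exact: LF_and.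
  + exact: LF_and.
  rewrite (@I_equiv a Ha (Fand (Fand c p) (Fneg e)) (Fand (Fand c (Fneg e)) p)); first last.
  + move=> v /=; tauto.
  + exact: LF_and.
  + exact: LF_and Hcp (LF_neg He).
  rewrite (@I_equiv b Hb (Fand (Fand c (Fneg p)) e) (Fand (Fand c e) (Fneg p))); first last.
  + move=> v /=; tauto.
  + exact: LF_and Hce (LF_neg Hp).
  + exact: LF_and.
  rewrite (@I_equiv b Hb (Fand (Fand c (Fneg p)) (Fneg e)) (Fand (Fand c (Fneg e)) (Fneg p))); first last.
  + move=> v /=; tauto.
  + exact: LF_and Hcne (LF_neg Hp).
  + exact: LF_and Hcnp (LF_neg He).
  ring.
Qed.

Lemma I_le_const t : tin D t -> forall c r, D c -> (forall v, sat v c -> tev t v <= r) ->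
  I m t c <= r * m c.
Proof.
elim: t => /= [s|p a IHa b IHb] Ht c r Hc H.
- case: (classic (exists v, sat v c)) => [[v hv]|nv].
  + exact: Rmult_le_compat_r (kge0 hk Hc) (H v hv).
  + rewrite (kzero hk Hc) => [|v hv]; [lra | apply: nv; by exists v].
- case: Ht => Hp [Ha Hb].
  have Hcp := LF_and Hc Hp. have Hcnp := LF_and Hc (LF_neg Hp).
  rewrite (ksplit hk Hc Hp).
  have h1 := IHa Ha _ r Hcp (fun v hv => eq_ind _ (fun z => z <= r) (H v hv.1) _ (tev_nt a b hv.2)).
  have h2 := IHb Hb _ r Hcnp (fun v hv => eq_ind _ (fun z => z <= r) (H v hv.1) _ (tev_nf a b hv.2)).
  lra.
Qed.

Lemma I_ge_const t : tin D t -> forall c r, D c -> (forall v, sat v c -> r <= tev t v) ->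
  r * m c <= I m t c.
Proof.
elim: t => /= [s|p a IHa b IHb] Ht c r Hc H.
- case: (classic (exists v, sat v c)) => [[v hv]|nv].
  + exact: Rmult_le_compat_r (kge0 hk Hc) (H v hv).
  + rewrite (kzero hk Hc) => [|v hv]; [lra | apply: nv; by exists v].
- case: Ht => Hp [Ha Hb].
  have Hcp := LF_and Hc Hp. have Hcnp := LF_and Hc (LF_neg Hp).
  rewrite (ksplit hk Hc Hp).
  have h1 := IHa Ha _ r Hcp (fun v hv => eq_ind _ (fun z => r <= z) (H v hv.1) _ (tev_nt a b hv.2)).
  have h2 := IHb Hb _ r Hcnp (fun v hv => eq_ind _ (fun z => r <= z) (H v hv.1) _ (tev_nf a b hv.2)).
  lra.
Qed.

Lemma I_mono t : tin D t -> forall t' c, tin D t' -> D c ->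
  (forall v, sat v c -> tev t' v <= tev t v) -> I m t' c <= I m t c.
Proof.
elim: t => /= [r|p a IHa b IHb] Ht t' c Ht' Hc H.
- exact: I_le_const.
- case: Ht => Hp [Ha Hb].
  have Hcp := LF_and Hc Hp. have Hcnp := LF_and Hc (LF_neg Hp).
  rewrite (I_split Ht' Hc Hp).
  have h1 := IHa Ha t' _ Ht' Hcp (fun v hv => eq_ind _ (fun z => tev t' v <= z) (H v hv.1) _ (tev_nt a b hv.2)).
  have h2 := IHb Hb t' _ Ht' Hcnp (fun v hv => eq_ind _ (fun z => tev t' v <= z) (H v hv.1) _ (tev_nf a b hv.2)).
  lra.
Qed.

Lemma I_shift r t : tin D t -> forall c, D c -> I m (tmapl (Rplus r) t) c = r * m c + I m t c.
Proof.
elim: t => /= [s|p a IHa b IHb] Ht c Hc; first ring.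
case: Ht => Hp [Ha Hb].
rewrite IHa // ?IHb //; [|exact: LF_and Hc (LF_neg Hp)|exact: LF_and].
rewrite (ksplit hk Hc Hp); ring.
Qed.

Lemma I_add t t' : tin D t -> tin D t' -> forall c, D c -> I m (tadd t t') c = I m t c + I m t' c.
Proof.
move=> Ht Ht'; elim: t Ht => /= [r|p a IHa b IHb] Ht c Hc; first exact: I_shift.
case: Ht => Hp [Ha Hb].
rewrite IHa // ?IHb //; [|exact: LF_and Hc (LF_neg Hp)|exact: LF_and].
rewrite (I_split Ht' Hc Hp); ring.
Qed.

End Int.
End Trees.
Arguments Leaf {L U}. Arguments Node {L U}.

Section Ext.
Local Open Scope R_scope.
Variable L : signature.
Variable U : structure L.
Notation form := (formula L U).

Definition exy (ys : seq nat) (p : form) : form := foldr (fun i acc => Fex i acc) p ys.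

Lemma sat_exy ys p : forall v, sat v (exy ys p) <->
  exists v', (forall k, k \notin ys -> v' k = v k) /\ sat v' p.
Proof.
elim: ys => [|i ys IH] v /=.
- split; [by move=> h; exists v | by move=> [v' [E h]]; have <- : v' = v by apply: functional_extensionality => k; apply: E].
- split.
  + move=> [a /IH [v' [E h]]]; exists v'; split => // k; rewrite inE negb_or => /andP [ki kys].
    by rewrite E // /upd (negbTE ki).
  + move=> [v' [E h]]; exists (v' i); apply/IH; exists v'; split => // k kys.
    rewrite /upd; case: eqP => [->|/eqP ki] //; apply: E.
    by rewrite inE negb_or ki kys.
Qed.

Lemma vars_exy ys p : forall S, form_vars_in (fun k => k \in ys \/ S k) p -> form_vars_in S (exy ys p).
Proof.
elim: ys => [|i ys IH] S /= H.
- apply: form_vars_mono H => k [] //.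
- apply: IH; apply: form_vars_mono H => k [].
  + rewrite inE => /orP [/eqP ->|h]; auto.
  + auto.
Qed.

Lemma pars_exy ys p B : form_pars_in B p -> form_pars_in B (exy ys p).
Proof. by elim: ys => //= i ys IH /IH. Qed.

Variables (x y : seq nat) (A : U -> Prop).
Hypothesis hxy : forall i, i \in x -> i \notin y.

Notation D1 := (LF (x ++ y) A).
Notation D2 := (LF x (@setT_ U)).
Notation D0 := (LF x A).

Lemma D0D1 p : D0 p -> D1 p.
Proof. apply: LF_mono => // k hk; by rewrite mem_cat hk. Qed.
Lemma D0D2 p : D0 p -> D2 p.
Proof. by apply: LF_mono. Qed.

Lemma LF_exy c : D1 c -> D0 (exy y c).
Proof.
move=> [h1 h2]; split; last exact: pars_exy.
apply: vars_exy; apply: form_vars_mono h1 => k; rewrite mem_cat => /orP []; auto.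
Qed.

Fixpoint minreg (t : @tree L U) (c : form) : @tree L U :=
  match t with
  | Leaf r => Leaf r
  | Node e a b =>
      Node (exy y (Fand c e))
        (Node (exy y (Fand c (Fneg e))) (tmin (minreg a (Fand c e)) (minreg b (Fand c (Fneg e))))
              (minreg a (Fand c e)))
        (minreg b (Fand c (Fneg e)))
  end.

Lemma minreg_node e a b c : minreg (Node e a b) c =
      Node (exy y (Fand c e))
        (Node (exy y (Fand c (Fneg e))) (tmin (minreg a (Fand c e)) (minreg b (Fand c (Fneg e))))
              (minreg a (Fand c e)))
        (minreg b (Fand c (Fneg e))).
Proof. by []. Qed.

Lemma tin_minreg t : forall c, tin D1 t -> D1 c -> tin D0 (minreg t c).
Proof.
elim: t => /= [r|e a IHa b IHb] c // [He [Ha Hb]] Hc.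
have Hce := LF_and Hc He. have Hcne := LF_and Hc (LF_neg He).
split; first exact: LF_exy.
split; last exact: IHb.
split; first exact: LF_exy.
split; last exact: IHa.
apply: tin_min; [exact: IHa | exact: IHb].
Qed.

Lemma self_exy v c : sat v c -> sat v (exy y c).
Proof. by move=> h; apply/sat_exy; exists v. Qed.

Lemma minreg_le t : forall c v, sat v c -> tev (minreg t c) v <= tev t v.
Proof.
elim: t => [r|e a IHa b IHb] c v hc; first by apply: Rle_refl.
case: (classic (sat v e)) => he.
- have X1 : sat v (exy y (Fand c e)) by apply: self_exy.
  rewrite minreg_node (tev_nt _ _ X1) (tev_nt _ _ he).
  have h1 := IHa (Fand c e) v (conj hc he).
  case: (classic (sat v (exy y (Fand c (Fneg e))))) => X2.
  + rewrite (tev_nt _ _ X2) tev_min; apply: Rle_trans h1; apply: Rmin_l.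
  + by rewrite (tev_nf _ _ X2).
- rewrite minreg_node (tev_nf _ _ he).
  have h2 := IHb (Fand c (Fneg e)) v (conj hc he).
  case: (classic (sat v (exy y (Fand c e)))) => X1.
  + have X2 : sat v (exy y (Fand c (Fneg e))) by apply: self_exy.
    rewrite (tev_nt _ _ X1) (tev_nt _ _ X2) tev_min; apply: Rle_trans h2; apply: Rmin_r.
  + by rewrite (tev_nf _ _ X1).
Qed.

Lemma minreg_wit t : forall c v, sat v (exy y c) -> exists v',
  (forall k, k \notin y -> v' k = v k) /\ sat v' c /\ tev t v' <= tev (minreg t c) v.
Proof.
elim: t => [r|e a IHa b IHb] c v hc.
- have [v' [E h]] := (sat_exy y c v).1 hc; exists v'; split => //; split => //; apply: Rle_refl.
- have usea : sat v (exy y (Fand c e)) -> exists v',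
     (forall k, k \notin y -> v' k = v k) /\ sat v' c /\ tev (Node e a b) v' <= tev (minreg a (Fand c e)) v.
    move=> X1; have [v' [E [[h1 h2] h3]]] := IHa _ _ X1.
    by exists v'; split => //; split => //; rewrite (tev_nt _ _ h2).
  have useb : sat v (exy y (Fand c (Fneg e))) -> exists v',
     (forall k, k \notin y -> v' k = v k) /\ sat v' c /\ tev (Node e a b) v' <= tev (minreg b (Fand c (Fneg e))) v.
    move=> X2; have [v' [E [[h1 h2] h3]]] := IHb _ _ X2.
    by exists v'; split => //; split => //; rewrite (tev_nf _ _ h2).
  case: (classic (sat v (exy y (Fand c e)))) => X1.
  + rewrite minreg_node (tev_nt _ _ X1).
    case: (classic (sat v (exy y (Fand c (Fneg e))))) => X2.
    * rewrite (tev_nt _ _ X2) tev_min.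
      case: (Rle_dec (tev (minreg a (Fand c e)) v) (tev (minreg b (Fand c (Fneg e))) v)) => hle.
      -- by rewrite Rmin_left //; apply: usea.
      -- rewrite Rmin_right; [by apply: useb | lra].
    * by rewrite (tev_nf _ _ X2); apply: usea.
  + rewrite minreg_node (tev_nf _ _ X1); apply: useb.
    have [v' [E h]] := (sat_exy y c v).1 hc.
    case: (classic (sat v' e)) => he.
    * by exfalso; apply: X1; apply/sat_exy; exists v'.
    * by apply/sat_exy; exists v'.
Qed.

Variables (m1 m2 : form -> R).
Hypothesis hk1 : keisler (x ++ y) A m1.
Hypothesis hk2 : keisler x (@setT_ U) m2.
Hypothesis hag : forall p, D0 p -> m1 p = m2 p.

Lemma I_agree t : tin D0 t -> forall c, D0 c -> I m1 t c = I m2 t c.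
Proof.
elim: t => /= [r|e a IHa b IHb] Ht c Hc; first by rewrite hag.
case: Ht => He [Ha Hb]; rewrite IHa ?IHb //; [exact: LF_and Hc (LF_neg He) | exact: LF_and].
Qed.

Lemma mixed_pos t1 t2 : tin D1 t1 -> tin D2 t2 -> (forall v, 0 <= tev t1 v + tev t2 v) ->
  0 <= I m1 t1 Ftrue + I m2 t2 Ftrue.
Proof.
move=> H1 H2 H.
pose h := minreg t1 Ftrue.
have Hh : tin D0 h by apply: tin_minreg.
have a : I m1 h Ftrue <= I m1 t1 Ftrue.
  apply: (I_mono hk1 H1 (tin_mono D0D1 Hh) (LF_true _ _)) => v _; exact: minreg_le.
have b : I m1 h Ftrue = I m2 h Ftrue by apply: I_agree.
have c : I m2 (tmapl (Rmult (-1)) t2) Ftrue <= I m2 h Ftrue.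
  apply: (I_mono hk2 (tin_mono D0D2 Hh) (tin_mapl _ H2) (LF_true _ _)) => v _.
  rewrite tev_mapl.
  have [v' [E [_ hv']]] := minreg_wit t1 (self_exy (v:=v) (c:=Ftrue) Logic.I).
  have e2 : tev t2 v' = tev t2 v.
    apply: (@tev_coinc _ _ (fun k => k \in x)).
    - exact: (tin_mono (fun p (hp : LF x (@setT_ U) p) => hp.1) H2).
    - by move=> k kx; apply: E; apply: hxy.
  have := H v'; rewrite e2; move: hv'; rewrite /h; lra.
rewrite I_scale in c; lra.
Qed.

Definition G (g : (nat -> U) -> R) (r : R) : Prop :=
  exists t1 t2, tin D1 t1 /\ tin D2 t2 /\ (forall v, g v <= tev t1 v + tev t2 v) /\
    I m1 t1 Ftrue + I m2 t2 Ftrue <= r.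

Lemma Gadd g h r s : G g r -> G h s -> G (fun v => g v + h v) (r + s).
Proof.
move=> [t1 [t2 [a1 [a2 [a3 a4]]]]] [u1 [u2 [b1 [b2 [b3 b4]]]]].
exists (tadd t1 u1), (tadd t2 u2); split; first exact: tin_add.
split; first exact: tin_add.
split; first by move=> v; rewrite !tev_add; have := a3 v; have := b3 v; lra.
rewrite (I_add hk1 a1 b1 (LF_true _ _)) (I_add hk2 a2 b2 (LF_true _ _)); lra.
Qed.

Lemma Gscale g r k : 0 < k -> G g r -> G (fun v => k * g v) (k * r).
Proof.
move=> kp [t1 [t2 [a1 [a2 [a3 a4]]]]].
exists (tmapl (Rmult k) t1), (tmapl (Rmult k) t2); split; first exact: tin_mapl.
split; first exact: tin_mapl.
split.
- move=> v; rewrite !tev_mapl -Rmult_plus_distr_l; apply: Rmult_le_compat_l; [lra | exact: a3].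
- rewrite !I_scale -Rmult_plus_distr_l; apply: Rmult_le_compat_l; lra.
Qed.

Lemma Gmono g h r : G g r -> (forall v, h v <= g v) -> G h r.
Proof.
move=> [t1 [t2 [a1 [a2 [a3 a4]]]]] H; exists t1, t2; do 3 (split => //).
by move=> v; apply: Rle_trans (a3 v).
Qed.

Lemma G0 r : G (fun _ => 0) r -> 0 <= r.
Proof.
move=> [t1 [t2 [a1 [a2 [a3 a4]]]]]; have := mixed_pos a1 a2 a3; lra.
Qed.

Definition ind (p : form) (v : nat -> U) : R := if sdec v p then 1 else 0.

Lemma ind_tev p v : ind p v = tev (Node p (Leaf 1) (Leaf 0)) v.
Proof. by []. Qed.

Theorem ext : exists om, keisler (x ++ y) (@setT_ U) om /\ agree (x ++ y) A om m1 /\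
   agree x (@setT_ U) (pi_x y om) m2.
Proof.
have [P HP] := HB_main Gadd Gscale Gmono G0.
have Wind : forall p, W P (ind p).
  move=> p; apply: HP.
  - exists 1; exists (Leaf 1), (Leaf 0); split => //; split => //; split.
    + move=> v; rewrite /ind /=; case: sdec; lra.
    + rewrite /= (ktrue hk1) (ktrue hk2); lra.
  - exists 0; exists (Leaf 0), (Leaf 0); split => //; split => //; split.
    + move=> v; rewrite /ind /=; case: sdec; lra.
    + rewrite /=; lra.
have Lneg : forall p, Lf P (fun v => -1 * ind p v) = -1 * Lf P (ind p).
  by move=> p; apply: Lscale.
pose om := fun p => Lf P (ind p).
have indeq : forall p q, (forall v, sat v p <-> sat v q) -> ind p = ind q.
  move=> p q E; apply: functional_extensionality => v; rewrite /ind.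
  case: (boolP (sdec v p)) => h1; case: (boolP (sdec v q)) => h2 //.
  - by exfalso; move/negbTE: h2 => /sdecN; apply; apply/E/sdecP.
  - by exfalso; move/negbTE: h1 => /sdecN; apply; apply/E/sdecP.
have ag1 : forall p, D1 p -> om p = m1 p.
  move=> p Hp.
  have Ht : tin D1 (Node p (Leaf 1) (Leaf 0)) by [].
  have Ht' : tin D1 (Node p (Leaf (-1)) (Leaf 0)) by [].
  have e1 : m1 (Fand Ftrue p) = m1 p by apply: (kinv hk1); [exact: LF_and|done|move=> v /=; tauto].
  have u : om p <= m1 p.
    apply: (Ldom (Wind p)); exists (Node p (Leaf 1) (Leaf 0)), (Leaf 0); split => //; split => //; split.
    + by move=> v; rewrite ind_tev /=; lra.
    + rewrite /= e1; lra.
  have l : -1 * om p <= -1 * m1 p.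
    rewrite /om -Lneg; apply: (Ldom (Wscale (-1) (Wind p))).
    exists (Node p (Leaf (-1)) (Leaf 0)), (Leaf 0); split => //; split => //; split.
    + by move=> v; rewrite /ind /=; case: sdec; lra.
    + rewrite /= e1; lra.
  lra.
have ag2 : forall p, D2 p -> om p = m2 p.
  move=> p Hp.
  have e1 : m2 (Fand Ftrue p) = m2 p by apply: (kinv hk2); [exact: LF_and|done|move=> v /=; tauto].
  have u : om p <= m2 p.
    apply: (Ldom (Wind p)); exists (Leaf 0), (Node p (Leaf 1) (Leaf 0)); split => //; split => //; split.
    + by move=> v; rewrite ind_tev /=; lra.
    + rewrite /= e1; lra.
  have l : -1 * om p <= -1 * m2 p.
    rewrite /om -Lneg; apply: (Ldom (Wscale (-1) (Wind p))).
    exists (Leaf 0), (Node p (Leaf (-1)) (Leaf 0)); split => //; split => //; split.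
    + by move=> v; rewrite /ind /=; case: sdec; lra.
    + rewrite /= e1; lra.
  lra.
exists om; split; last split.
- split.
  + by move=> p q _ _ E; rewrite /om (indeq p q E).
  + move=> p _.
    have : -1 * om p <= 0.
      rewrite /om -Lneg; apply: (Ldom (Wscale (-1) (Wind p))).
      exists (Leaf 0), (Leaf 0); split => //; split => //; split.
      * by move=> v; rewrite /ind /=; case: sdec; lra.
      * rewrite /=; lra.
    lra.
  + by rewrite ag1 // (ktrue hk1).
  + move=> p q _ _ dis; rewrite /om.
    have -> : ind (For p q) = (fun v => 1 * ind p v + 1 * ind q v).
      apply: functional_extensionality => v; rewrite /ind.
      case: (boolP (sdec v (For p q))) => h0; case: (boolP (sdec v p)) => h1; case: (boolP (sdec v q)) => h2;
        move: h0 h1 h2; rewrite ?negbK => h0 h1 h2;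
        try (move/sdecP: h0 => h0); try (move/sdecP: h1 => h1); try (move/sdecP: h2 => h2);
        try (move/negbTE/sdecN: h0 => h0); try (move/negbTE/sdecN: h1 => h1); try (move/negbTE/sdecN: h2 => h2);
        move: h0; rewrite sat_or => h0; try lra; exfalso; try tauto; exact: (dis v).
    by rewrite /om Llin //; ring.
- by move=> p Hp; apply: ag1.
- move=> p Hp; rewrite /pi_x -(ag2 p Hp) /om.
  by rewrite (indeq _ p) // => v /=; split => [[]|] //; split => //; apply: sat_tuple_eq.
Qed.

End Ext.

Section Aux.
Local Open Scope R_scope.
Variable L : signature.
Variable U : structure L.
Notation form := (formula L U).

Lemma kloc S B (m : form -> R) e k : keisler S B m -> LF S B e -> m (Fand Ftrue e) = k -> 0 < k ->
  keisler S B (fun th => m (Fand th e) / k).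
Proof.
move=> hk He Hk kp; split.
- move=> p q Hp Hq E; rewrite (kinv hk (q := Fand q e)) //; [exact: LF_and|exact: LF_and|].
  by move=> v /=; rewrite E.
- move=> p Hp; exact: Rmult_le_pos (kge0 hk (LF_and Hp He)) (Rlt_le _ _ (Rinv_0_lt_compat _ kp)).
- rewrite Hk; field; lra.
- move=> p q Hp Hq dis.
  rewrite (kinv hk (q := For (Fand p e) (Fand q e))); first last.
  + move=> v; have := sat_or v p q; have := sat_or v (Fand p e) (Fand q e); rewrite /=; tauto.
  + apply: LF_or; exact: LF_and.
  + apply: LF_and => //; exact: LF_or.
  rewrite (kadd hk); [|exact: LF_and|exact: LF_and|move=> v /= [[? ?] [? ?]]; apply: (dis v); tauto].
  field; lra.
Qed.

Lemma kmix S B (m m' : form -> R) c : keisler S B m -> keisler S B m' -> 0 <= c <= 1 ->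
  keisler S B (fun th => c * m th + (1 - c) * m' th).
Proof.
move=> h h' hc; split.
- by move=> p q Hp Hq E; rewrite (kinv h Hp Hq E) (kinv h' Hp Hq E).
- move=> p Hp; have := kge0 h Hp; have := kge0 h' Hp => a b.
  apply: Rplus_le_le_0_compat; apply: Rmult_le_pos; lra.
- rewrite (ktrue h) (ktrue h'); ring.
- move=> p q Hp Hq dis; rewrite (kadd h) // (kadd h') //; ring.
Qed.
End Aux.

Unset Implicit Arguments.

Theorem proposition3p20 (L : signature) (U : structure L) (K : Type)
  (hU : monster U K) (A : U -> Prop) (hA : small K A)
  (x y : seq nat) (hx : uniq x) (hy : uniq y)
  (hxy : forall i, i \in x -> i \notin y)
  (mu nu : formula L U -> R)
  (hmu : keisler x (@setT_ U) mu) (hnu : keisler y (@setT_ U) nu)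
  (phi : formula L U) (hphi : LF y A phi)
  (h0 : Rlt 0 (nu phi)) (h1 : Rlt (nu phi) 1)
  (lam : formula L U -> R) (hlam : sep_amalgam x y A lam)
  (hw : E_dom_witness x y A mu nu lam) :
  E_dom x y A mu (localize nu phi).
Proof.
Local Open Scope R_scope.
case: hw => hk hpx hall.
case: hlam => _ hsep.
pose T := @tuple_eq L U x.
have inxy : forall k, k \in y -> k \in x ++ y by move=> k hk'; rewrite mem_cat hk' orbT.
have inxy' : forall k, k \in x -> k \in x ++ y by move=> k hk'; rewrite mem_cat hk'.
have Tall : forall B, LF (x ++ y) B T by move=> B; apply: LF_tuple_eq.
have TyA : forall B, LF (x ++ y) B (@tuple_eq L U y) by move=> B; apply: LF_tuple_eq.
have phiA : LF (x ++ y) A phi by apply: LF_mono hphi.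
have phiT : LF (x ++ y) (@setT_ U) phi by apply: LF_mono hphi.
have lamx : forall p, LF x A p -> lam p = mu p.
  move=> p Hp; rewrite -(hpx p Hp) /pi_x; apply: (kinv hk).
  - by apply: LF_mono Hp.
  - apply: LF_and; [by apply: LF_mono Hp | done].
  - by move=> v; have ty := @sat_tuple_eq L U v y; simpl; tauto.
pose c := lam (Fand T phi).
have lamT : lam T = 1 by rewrite -(ktrue hk); apply: (kinv hk) => // v; split => // _; apply: sat_tuple_eq.
have lamTn : lam (Fand T (Fneg phi)) = 1 - c by have := ksplit hk (Tall A) phiA; rewrite lamT -/c; lra.
have [om0 [hk0 [ag0 px0]]] := ext hxy hk hmu lamx.
have nuc : nu phi = c.
  have := hall om0 hk0 ag0 px0 phi (LF_mono (fun k h => h) (fun _ _ => Logic.I) hphi).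
  rewrite /pi_y -/T => <-; apply: ag0; exact: LF_and.
have cpos : 0 < c by rewrite -nuc.
have c1 : c < 1 by rewrite -nuc.
have loc : forall e k, LF y A e -> lam (Fand T e) = k -> 0 < k ->
    keisler (x ++ y) A (fun th => lam (Fand th e) / k) /\
    agree x A (pi_x y (fun th => lam (Fand th e) / k)) mu.
  move=> e k He Hk kp.
  have HeA : LF (x ++ y) A e by apply: LF_mono He.
  split.
  - apply: kloc => //; rewrite -Hk; apply: (kinv hk); [exact: LF_and|exact: LF_and|].
    by move=> v /=; split => [[_ h]|[_ h]]; split => //; apply: sat_tuple_eq.
  - move=> p Hp; rewrite /pi_x.
    have HpA : LF (x ++ y) A p by apply: LF_mono Hp.
    rewrite (kinv hk (q := Fand p e)); first last.
    + by move=> v /=; split => [[[h _] h']|[h h']]; do ! split => //; apply: sat_tuple_eq.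
    + exact: LF_and.
    + by apply: LF_and => //; apply: LF_and.
    rewrite hsep // /pi_y -/T Hk /pi_x.
    rewrite (kinv hk (p := Fand p (tuple_eq L U y)) (q := p)); first last.
    + by move=> v /=; split => [[]|h] //; split => //; apply: sat_tuple_eq.
    + done.
    + exact: LF_and.
    rewrite lamx //; field; lra.
have [hk1 ag1] := loc phi c hphi erefl cpos.
have [hk2 ag2] := loc (Fneg phi) (1 - c) (LF_neg hphi) lamTn ltac:(lra).
exists (fun th => lam (Fand th phi) / c); split => //.
move=> om' hk' hag' hpx'.
have lam2x : forall p, LF x A p -> lam (Fand p (Fneg phi)) / (1 - c) = mu p.
  move=> p Hp; rewrite -(ag2 p Hp) /pi_x.
  apply: (kinv hk2); [by apply: LF_mono Hp | apply: LF_and; [by apply: LF_mono Hp|done] |].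
  by move=> v /=; split => [h|[]] //; split => //; apply: sat_tuple_eq.
have [om'' [hk'' [hag'' hpx'']]] := ext hxy hk2 hmu lam2x.
pose om := fun th => c * om' th + (1 - c) * om'' th.
have hkom : keisler (x ++ y) (@setT_ U) om by apply: kmix => //; lra.
have agom : agree (x ++ y) A om lam.
  move=> th Hth; rewrite /om hag' // hag'' //.
  rewrite (ksplit hk Hth phiA); field; lra.
have pxom : agree x (@setT_ U) (pi_x y om) mu.
  by move=> p Hp; rewrite /pi_x /om -!/(pi_x y _ p) hpx' // hpx'' //; ring.
have nuom := hall om hkom agom pxom.
move=> q Hq; rewrite /pi_y /localize -/T nuc.
have HqT : LF (x ++ y) (@setT_ U) q by apply: LF_mono Hq.
have Hpq : LF y (@setT_ U) (Fand phi q) by apply: LF_and => //; apply: LF_mono hphi.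
rewrite -(nuom _ Hpq) /pi_y /om -/T.
have z2 : om'' (Fand T (Fand phi q)) = 0.
  apply: Rle_antisym; last by apply: (kge0 hk''); apply: LF_and => //; apply: LF_and.
  apply: (Rle_trans _ (om'' (Fand T phi))).
  - apply: (kmono hk''); [apply: LF_and => //; apply: LF_and => //| exact: LF_and |].
    by move=> v /= [? [? ?]].
  - rewrite hag''; last exact: LF_and.
    rewrite (kzero hk); [rewrite /Rdiv Rmult_0_l; lra | apply: LF_and; [exact: LF_and|exact: LF_neg] |].
    by move=> v /= [[_ ?] ?].
have z1 : om' (Fand T (Fand phi q)) = om' (Fand T q).
  have HTq : LF (x ++ y) (@setT_ U) (Fand T q) by exact: LF_and.
  rewrite (ksplit hk' HTq phiT).
  have n0 : om' (Fand (Fand T q) (Fneg phi)) = 0.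
    apply: Rle_antisym; last by apply: (kge0 hk'); apply: LF_and => //; apply: LF_neg.
    apply: (Rle_trans _ (om' (Fand T (Fneg phi)))).
    - apply: (kmono hk'); [apply: LF_and => //; apply: LF_neg => //| apply: LF_and => //; exact: LF_neg |].
      by move=> v /= [[? ?] ?].
    - rewrite hag'; last by apply: LF_and => //; exact: LF_neg.
      rewrite (kzero hk); [rewrite /Rdiv Rmult_0_l; lra | apply: LF_and; [apply: LF_and => //; exact: LF_neg|done] |].
      by move=> v /= [[_ ?] ?].
  rewrite n0 Rplus_0_r; apply: (kinv hk').
  - by apply: LF_and => //; apply: LF_and.
  - exact: LF_and.
  - by move=> v /=; tauto.
rewrite z1 z2; field; lra.
Qed.
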